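(* Let $D$ be a finite index set and, for each $H\in D$, let $T_H(\mathbf{X})=\sum_{i=1}^{M_H}\theta_{H,i}\,\varphi_i^H(\mathbf{X})$ for $\mathbf{X}\in\mathbb{R}^D$, where each $\varphi_i^H(\mathbf{X})$ is a product of finitely many constants from $[0,1]$ and finitely many components $X_C$ ($C\in D$) of $\mathbf{X}$, and where (generative exclusiveness condition) for each $H$ the numbers $\theta_{H,1},\dots,\theta_{H,M_H}$ are the probabilities of pairwise distinct values $v_1,\dots,v_{M_H}$ of a single discrete random variable (so $\theta_{H,i}\ge 0$ and $\sum_{i=1}^{M_H}\theta_{H,i}\le 1$). Let $T=(T_H)_{H\in D}$, and define $\mathbf{X}_0=\mathbf{0}$ and $\mathbf{X}_{k+1}=T(\mathbf{X}_k)$ for $k\ge 0$. Then $\mathbf{X}_k\le\mathbf{1}$ for every $k\ge 0$.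
   Context: Vectors are compared componentwise; $\mathbf{0}$ and $\mathbf{1}$ denote the all-zero and all-one vectors in $\mathbb{R}^D$. The system $\mathbf{X}=T(\mathbf{X})$ is the set of probability equations derived from an explanation graph: $X_H$ is the unknown probability of a goal $H$, and the disjuncts of the defining formula of $H$ are each selected by a distinct outcome $v_i$ of one probabilistic switch with probability $\theta_{H,i}$. *)

(* Defs.v *)
From mathcomp Require Import all_boot all_order all_algebra.
Set Implicit Arguments. Unset Strict Implicit. Unset Printing Implicit Defensive.
Import Order.TTheory GRing.Theory Num.Theory.
Local Open Scope ring_scope.

Record monomial (R : Type) (D : Type) := Monomial {
  mconsts : seq R;
  mvars : seq D     (* the indices C of the factors X_C (repetition allowed) *)
}.

Definition meval (R : realFieldType) (D : finType) (m : monomial R D)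
  (X : D -> R) : R :=
  (\prod_(c <- mconsts m) c) * \prod_(C <- mvars m) X C.

Definition Tmap (R : realFieldType) (D : finType) (M : D -> nat)
  (theta : forall H : D, 'I_(M H) -> R)
  (phi : forall H : D, 'I_(M H) -> monomial R D)
  (X : D -> R) : D -> R :=
  fun H => \sum_(i < M H) theta H i * meval (phi H i) X.

Definition Xseq (R : realFieldType) (D : finType) (M : D -> nat)
  (theta : forall H : D, 'I_(M H) -> R)
  (phi : forall H : D, 'I_(M H) -> monomial R D) (k : nat) : D -> R :=
  iter k (Tmap theta phi) (fun _ => 0).

(* Main.v *)
Require Import Defs.
From mathcomp Require Import all_boot all_order all_algebra.
Import Order.TTheory GRing.Theory Num.Theory.
Local Open Scope ring_scope.

Lemma prod01 (R : realFieldType) (T : eqType) (s : seq T) (f : T -> R) :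
  (forall x, x \in s -> (0 <= f x) && (f x <= 1)) ->
  (0 <= \prod_(x <- s) f x) && (\prod_(x <- s) f x <= 1).
Proof.
elim: s => [|a s IH] H; first by rewrite big_nil ler01 lexx.
rewrite big_cons.
have /andP[a0 a1] := H a (mem_head a s).
have /andP[p0 p1] : (0 <= \prod_(x <- s) f x) && (\prod_(x <- s) f x <= 1).
  by apply: IH => x xs; apply: H; rewrite inE xs orbT.
rewrite mulr_ge0 //=.
by rewrite mulr_ile1.
Qed.

Theorem lemma2 (R : realFieldType) (D : finType) (M : D -> nat)
  (theta : forall H : D, 'I_(M H) -> R)
  (phi : forall H : D, 'I_(M H) -> monomial R D)
  (theta_ge0 : forall (H : D) (i : 'I_(M H)), 0 <= theta H i)
  (theta_sum : forall H : D, \sum_(i < M H) theta H i <= 1)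
  (consts01 : forall (H : D) (i : 'I_(M H)),
      all (fun c => (0 <= c) && (c <= 1)) (mconsts (phi H i))) :
  forall (k : nat) (H : D), Xseq theta phi k H <= 1.
Proof.
suff S : forall k H, (0 <= Xseq theta phi k H) && (Xseq theta phi k H <= 1).
  by move=> k H; case/andP: (S k H).
elim=> [|k IH] H; first by rewrite /Xseq /= lexx ler01.
rewrite /Xseq iterS -/(Xseq theta phi k) /Tmap.
have me : forall i : 'I_(M H), (0 <= meval (phi H i) (Xseq theta phi k))
    && (meval (phi H i) (Xseq theta phi k) <= 1).
  move=> i; rewrite /meval.
  have /andP[c0 c1] := @prod01 R R _ id (fun x xs => (allP (consts01 H i)) x xs).
  have /andP[v0 v1] := @prod01 R D (mvars (phi H i)) (Xseq theta phi k) (fun x _ => IH x).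
  by rewrite mulr_ge0 //= mulr_ile1.
apply/andP; split.
  by apply: sumr_ge0 => i _; rewrite mulr_ge0 //; case/andP: (me i).
apply: le_trans (theta_sum H).
apply: ler_sum => i _.
case/andP: (me i) => _ m1.
by rewrite -{2}(mulr1 (theta H i)) ler_wpM2l.
Qed.
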